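(* For every integer $k\ge2$, in the setting of the context, $\lim_{p\to\infty}\gamma_p(k)=\frac{12}{k}$.
   Context: For integers $k\ge2$, $n\ge1$ and $x\in\mathbb R$: $P_{n,k}(x)=\left(1+\frac{x^{n-1}}{2}\right)^{k+1}-\left(1-\frac{x^{n-1}}{2}\right)^{k+1}$, and for $n>k$: $Q_{n,k}(x)=(k+1)x^{n-k}$. Fix an integer $k\ge2$ and, for each integer $n>k$, an arbitrary $\xi(k;n)\in(0,1)$ with $P_{n,k}(\xi(k;n))=Q_{n,k}(\xi(k;n))$. Let $\alpha=\limsup_{n\to\infty}\xi(k;n)^{n-1}$ and let $(n_p)_{p\in\mathbb N}$ be a strictly increasing sequence of integers $>k$ with $\xi(k;n_p)^{n_p-1}\to\alpha$. For $n>k$ put $$C_n(k)=\frac{\xi(k;n)^{3n-k-2}}{\frac{1}{k+2}\left[\left(1+\frac{\xi(k;n)^{n-1}}{2}\right)^{k+2}-\left(1-\frac{\xi(k;n)^{n-1}}{2}\right)^{k+2}\right]-\xi(k;n)^{n-k}},$$ and $\gamma_p(k)=C_{n_p}(k)$ for $p\in\mathbb N$. *)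

(* Defs.v *)
From Stdlib Require Import Reals Lra Lia.
Open Scope R_scope.

Definition P (n k : nat) (x : R) : R :=
  (1 + x ^ (n - 1) / 2) ^ (k + 1) - (1 - x ^ (n - 1) / 2) ^ (k + 1).

(* Q_{n,k}(x) = (k+1) x^(n-k), used for n > k *)
Definition Q (n k : nat) (x : R) : R := INR (k + 1) * x ^ (n - k).

(* C_n(k) evaluated at the chosen root x = xi(k;n) *)
Definition Cn (n k : nat) (x : R) : R :=
  x ^ (3 * n - k - 2) /
  (/ INR (k + 2) *
     ((1 + x ^ (n - 1) / 2) ^ (k + 2) - (1 - x ^ (n - 1) / 2) ^ (k + 2))
   - x ^ (n - k)).

Definition is_limsup (u : nat -> R) (l : R) : Prop :=
  forall eps : R, eps > 0 ->
    (exists N : nat, forall n : nat, (n >= N)%nat -> u n < l + eps) /\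
    (forall N : nat, exists n : nat, (n >= N)%nat /\ l - eps < u n).

(* Main.v *)
Require Import Defs.
From Stdlib Require Import Reals Lra Lia.
From Coquelicot Require Import Coquelicot.
Open Scope R_scope.

Fixpoint V (i : nat) (t : R) : R := match i with O => 0 | S i => 1 + (1 - t) * V i t end.
Fixpoint W (m : nat) (t : R) : R := match m with O => 0 | S m => W m t + V m t end.
Fixpoint RR (m : nat) (t : R) : R := match m with O => 0 | S m => (1 + t) * RR m t + 2 * W m t end.

Lemma V_id i t : (1 - t) ^ i = 1 - t * V i t.
Proof. induction i; simpl. ring. rewrite IHi. ring. Qed.

Lemma W_id m t : INR m - V m t = t * W m t.
Proof. induction m. simpl; ring. rewrite S_INR. simpl V; simpl W. nra. Qed.

Lemma RR_id m t : (1 + t) ^ m - (1 - t) ^ m = 2 * INR m * t + t ^ 3 * RR m t.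
Proof.
  induction m. simpl; ring.
  rewrite S_INR. simpl (RR (S m) t).
  replace ((1 + t) ^ S m - (1 - t) ^ S m) with ((1+t) * ((1 + t) ^ m - (1 - t) ^ m) + 2 * t * (1-t)^m) by (simpl; ring).
  rewrite IHm, V_id. pose proof (W_id m t). nra.
Qed.

Lemma V0 i : V i 0 = INR i.
Proof. induction i; simpl V. simpl; ring. rewrite S_INR, IHi. ring. Qed.
Lemma W0 m : W m 0 = INR m * (INR m - 1) / 2.
Proof. induction m; simpl W. simpl; field. rewrite S_INR, IHm, V0. field. Qed.
Lemma RR0 m : RR m 0 = INR m * (INR m - 1) * (INR m - 2) / 3.
Proof. induction m; simpl RR. simpl; field. rewrite S_INR, IHm, W0. field. Qed.

Lemma V_nn i t : 0 <= t <= 1 -> 0 <= V i t.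
Proof. intros H; induction i; simpl; nra. Qed.
Lemma W_nn m t : 0 <= t <= 1 -> 0 <= W m t.
Proof. intros H; induction m; simpl. lra. pose proof (V_nn m t H); lra. Qed.
Lemma RR_nn m t : 0 <= t <= 1 -> 0 <= RR m t.
Proof. intros H; induction m; simpl. lra. pose proof (W_nn m t H); nra. Qed.
Lemma W_ge1 m t : 0 <= t <= 1 -> 1 <= W (S (S m)) t.
Proof. intros H; induction m. simpl. lra. change (W (S (S (S m))) t) with (W (S (S m)) t + V (S (S m)) t).
  pose proof (V_nn (S (S m)) t H); lra. Qed.
Lemma RR_ge2 m t : 0 <= t <= 1 -> 2 <= RR (S (S (S m))) t.
Proof. intros H. change (RR (S (S (S m))) t) with ((1 + t) * RR (S (S m)) t + 2 * W (S (S m)) t).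
  pose proof (RR_nn (S (S m)) t H). pose proof (W_ge1 m t H). nra. Qed.

Lemma V_lim i u : is_lim_seq u 0 -> is_lim_seq (fun p => V i (u p)) (INR i).
Proof. intros Hu; induction i; simpl V.
  - apply is_lim_seq_const.
  - rewrite S_INR. replace (INR i + 1) with (1 + (1 - 0) * INR i) by ring.
    apply is_lim_seq_plus'. apply is_lim_seq_const. apply is_lim_seq_mult'; auto.
    apply is_lim_seq_minus'; auto. apply is_lim_seq_const. Qed.
Lemma W_lim m u : is_lim_seq u 0 -> is_lim_seq (fun p => W m (u p)) (W m 0).
Proof. intros Hu; induction m; simpl W.
  - apply is_lim_seq_const.
  - apply is_lim_seq_plus'; auto. rewrite V0. apply V_lim; auto. Qed.
Lemma RR_lim m u : is_lim_seq u 0 -> is_lim_seq (fun p => RR m (u p)) (RR m 0).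
Proof. intros Hu; induction m; simpl RR.
  - apply is_lim_seq_const.
  - apply is_lim_seq_plus'; apply is_lim_seq_mult'; auto.
    apply is_lim_seq_plus'; auto. apply is_lim_seq_const. apply is_lim_seq_const. apply W_lim; auto. Qed.
Lemma pow_bounds x m : 0 < x < 1 -> 0 < x ^ m <= 1.
Proof. intros H; induction m; simpl; nra. Qed.

Lemma key_eq k n x : (k < n)%nat -> P n k x = Q n k x ->
  INR (k+1) * x ^ (n - k) = 2 * INR (k+1) * (x^(n-1)/2) + (x^(n-1)/2) ^ 3 * RR (k+1) (x^(n-1)/2).
Proof. intros Hn HPQ. unfold P, Q in HPQ. rewrite RR_id in HPQ. lra. Qed.

Lemma split_pow k n x : (k < n)%nat -> (1 <= k)%nat -> x ^ (n-1) = x ^ (k-1) * x ^ (n-k).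
Proof. intros; rewrite <- pow_add; f_equal; lia. Qed.

Lemma ylim k (Hk : (2 <= k)%nat) (xi : nat -> R)
  (Hxi : forall n : nat, (k < n)%nat -> 0 < xi n < 1 /\ P n k (xi n) = Q n k (xi n)) :
  forall eps, 0 < eps -> exists N, forall n, (N <= n)%nat -> (k < n)%nat -> xi n ^ (n-1) < eps.
Proof.
  intros eps He.
  set (K := INR (k+1)).
  assert (HK : 0 < K) by (unfold K; apply lt_0_INR; lia).
  set (q := K / (K + eps^2/4)).
  assert (Hq : 0 < q < 1).
  { unfold q. split. apply Rdiv_lt_0_compat; nra. apply Rmult_lt_reg_r with (K + eps^2/4). nra.
    unfold Rdiv. rewrite Rmult_assoc, Rinv_l by nra. nra. }
  destruct (pow_lt_1_zero q ltac:(rewrite Rabs_pos_eq; lra) (eps ^ (k-1)) ltac:(apply pow_lt; lra)) as [N HN].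
  exists (S N). intros n Hn Hkn.
  destruct (Hxi n Hkn) as [Hx HPQ].
  set (x := xi n) in *.
  destruct (Rlt_or_le (x ^ (n-1)) eps) as [Hlt|Hge]; [exact Hlt|exfalso].
  pose proof (key_eq k n x Hkn HPQ) as E. fold K in E.
  set (y := x^(n-1)) in *.
  set (t := y/2) in *.
  assert (Hy : 0 < y <= 1) by (apply pow_bounds; auto).
  assert (Ht : 0 <= t <= 1) by (unfold t; lra).
  assert (HR : 2 <= RR (k+1) t).
  { replace (k+1)%nat with (S (S (S (k-2)))) by lia. apply RR_ge2; auto. }
  assert (Hsp : y = x ^ (k-1) * x ^ (n-k)) by (apply split_pow; lia).
  set (a := x ^ (k-1)) in *. set (z := x ^ (n-k)) in *.
  assert (Ha : 0 < a <= 1) by (apply pow_bounds; auto).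
  assert (Hz : 0 < z <= 1) by (apply pow_bounds; auto).
  assert (E2 : K * y = a * (K * y + t^3 * RR (k+1) t)).
  { rewrite Hsp at 1. replace (K * (a * z)) with (a * (K * z)) by ring. rewrite E. unfold t. field. }
  assert (E3 : 2 * K = a * (2 * K + t^2 * RR (k+1) t)).
  { assert (0 < t) by (unfold t; lra). apply Rmult_eq_reg_l with t; [|lra].
    replace y with (2*t) in E2 by (unfold t; field). nra. }
  assert (Haq : a <= q).
  { unfold q. apply Rmult_le_reg_r with (K + eps^2/4). nra.
    unfold Rdiv. rewrite Rmult_assoc, Rinv_l by nra. rewrite Rmult_1_r.
    assert (eps/2 <= t) by (unfold t; lra).
    assert (eps^2/4 <= t^2) by nra.
    assert (t^2 * 2 <= t^2 * RR (k+1) t) by nra. nra. }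
  assert (H1 : y ^ (k-1) = a ^ (n-1)).
  { unfold y, a. rewrite <- !pow_mult. f_equal. lia. }
  assert (H2 : a ^ (n-1) <= q ^ (n-1)) by (apply pow_incr; lra).
  assert (H3 : eps ^ (k-1) <= y ^ (k-1)) by (apply pow_incr; lra).
  specialize (HN (n-1)%nat ltac:(lia)). rewrite Rabs_pos_eq in HN by (apply pow_le; lra).
  lra.
Qed.
Lemma Cn_eq k n x : (2 <= k)%nat -> (k < n)%nat -> 0 < x < 1 -> P n k x = Q n k x ->
  let t := x ^ (n-1) / 2 in
  RR (k+2) t / INR (k+2) - RR (k+1) t / INR (k+1) <> 0 ->
  Cn n k x = 4 * (2 + t^2 * RR (k+1) t / INR (k+1)) * / (RR (k+2) t / INR (k+2) - RR (k+1) t / INR (k+1)).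
Proof.
  intros Hk Hn Hx HPQ t HD.
  pose proof (key_eq k n x Hn HPQ) as E. fold t in E.
  assert (Hy : 0 < x ^ (n-1) <= 1) by (apply pow_bounds; auto).
  assert (Ht : 0 < t) by (unfold t; lra).
  assert (K1 : 0 < INR (k+1)) by (apply lt_0_INR; lia).
  assert (K2 : 0 < INR (k+2)) by (apply lt_0_INR; lia).
  unfold Cn.
  replace (x ^ (3 * n - k - 2)) with (x^(n-1) * x^(n-1) * x^(n-k)) by (rewrite <- !pow_add; f_equal; lia).
  rewrite RR_id. fold t.
  replace (x ^ (n-1)) with (2 * t) by (unfold t; field).
  assert (Ez : x ^ (n-k) = 2 * t + t^3 * RR (k+1) t / INR (k+1)).
  { apply Rmult_eq_reg_l with (INR (k+1)); [|lra]. rewrite E. field. lra. }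
  rewrite Ez.
  replace (/ INR (k + 2) * (2 * INR (k + 2) * t + t ^ 3 * RR (k + 2) t) - (2 * t + t ^ 3 * RR (k + 1) t / INR (k + 1)))
    with (t^3 * (RR (k+2) t / INR (k+2) - RR (k+1) t / INR (k+1))) by (field; lra).
  assert (RR (k + 2) t * INR (k + 1) - RR (k + 1) t * INR (k + 2) <> 0).
  { intro H; apply HD. replace (RR (k + 2) t / INR (k + 2) - RR (k + 1) t / INR (k + 1)) with
      ((RR (k + 2) t * INR (k + 1) - RR (k + 1) t * INR (k + 2)) / (INR (k+2) * INR (k+1))) by (field; lra).
    rewrite H. unfold Rdiv; ring. }
  field. repeat split; try assumption; lra.
Qed.

Theorem lemma5p6 (k : nat) (Hk : (2 <= k)%nat)
  (xi : nat -> R)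
  (Hxi : forall n : nat, (k < n)%nat ->
           0 < xi n < 1 /\ P n k (xi n) = Q n k (xi n))
  (alpha : R)
  (Halpha : is_limsup (fun n => xi n ^ (n - 1)) alpha)
  (np : nat -> nat)
  (Hinc : forall p : nat, (np p < np (S p))%nat)
  (Hgt : forall p : nat, (k < np p)%nat)
  (Hcv : Un_cv (fun p => xi (np p) ^ (np p - 1)) alpha) :
  Un_cv (fun p => Cn (np p) k (xi (np p))) (12 / INR k).
Proof.
  assert (Hnp : forall p, (p <= np p)%nat).
  { induction p. lia. specialize (Hinc p). lia. }
  set (u := fun p => xi (np p) ^ (np p - 1) / 2).
  assert (Hu : is_lim_seq u 0).
  { apply is_lim_seq_spec. intros eps.
    destruct (ylim k Hk xi Hxi (2 * eps)) as [N HN]. destruct eps; simpl; lra.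
    exists N. intros p Hp. specialize (HN (np p) ltac:(specialize (Hnp p); lia) (Hgt p)).
    destruct (Hxi (np p) (Hgt p)) as [Hx _].
    pose proof (pow_bounds (xi (np p)) (np p - 1) Hx).
    unfold u. rewrite Rminus_0_r, Rabs_pos_eq by lra. lra. }
  set (D := fun p => RR (k+2) (u p) / INR (k+2) - RR (k+1) (u p) / INR (k+1)).
  assert (K0 : 0 < INR k) by (apply lt_0_INR; lia).
  assert (HD : is_lim_seq D (2 * INR k / 3)).
  { replace (2 * INR k / 3) with (RR (k+2) 0 * / INR (k+2) - RR (k+1) 0 * / INR (k+1)).
    2:{ rewrite !RR0, !plus_INR. simpl. field. split; lra. }
    unfold D. apply is_lim_seq_minus'; apply is_lim_seq_mult'; try apply RR_lim; auto; apply is_lim_seq_const. }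
  assert (HG : is_lim_seq (fun p => 4 * (2 + u p ^ 2 * RR (k+1) (u p) / INR (k+1)) * / D p) (12 / INR k)).
  { replace (12 / INR k) with (4 * (2 + 0 ^ 2 * RR (k+1) 0 * / INR (k+1)) * / (2 * INR k / 3)).
    2:{ simpl. rewrite plus_INR. simpl. field. repeat split; lra. }
    assert (L2 : is_lim_seq (fun p => u p ^ 2) (0 ^ 2)).
    { simpl. apply is_lim_seq_mult'; auto. apply is_lim_seq_mult'; auto. apply is_lim_seq_const. }
    assert (L3 : is_lim_seq (fun p => u p ^ 2 * RR (k+1) (u p) / INR (k+1)) (0 ^ 2 * RR (k+1) 0 * / INR (k+1))).
    { apply is_lim_seq_mult'. apply is_lim_seq_mult'; auto. apply RR_lim; auto. apply is_lim_seq_const. }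
    apply is_lim_seq_mult'. apply is_lim_seq_mult'. apply is_lim_seq_const.
    apply is_lim_seq_plus'. apply is_lim_seq_const. exact L3.
    apply (is_lim_seq_inv D (2 * INR k / 3)) in HD. exact HD. intro H; injection H; lra. }
  apply is_lim_seq_Reals.
  apply is_lim_seq_ext_loc with (2 := HG).
  apply is_lim_seq_spec in HD.
  destruct (HD (mkposreal (INR k / 3) ltac:(lra))) as [N HN].
  exists N. intros p Hp. specialize (HN p Hp). simpl in HN.
  apply Rabs_lt_between in HN.
  destruct (Hxi (np p) (Hgt p)) as [Hx HPQ].
  assert (HDp : D p > 0) by lra. unfold D in HDp. rewrite Cn_eq; auto. unfold u in *; lra.
Qed.
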